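(* Let $q$ be a prime and let $f:\mathbb{N}\to\{0,1\}$ be a multiplicative $q$-automatic sequence such that $\widehat{\mathbb{P}_1}$ is infinite. Then there exists $\alpha\in\mathbb{N}$ such that the set $\{p\in\widehat{\mathbb{P}_1} : \alpha_p=\alpha\}$ is infinite.
   Context: $f$ multiplicative means $f(mn)=f(m)f(n)$ whenever $\gcd(m,n)=1$; $f$ is $q$-automatic if its $q$-kernel $\{\{f(q^in+r)\}_{n\ge 0}: i\ge 1, 0\le r\le q^i-1\}$ is finite. $\widehat{\mathbb{P}_1}=\{p \text{ prime} : f(p^e)=1 \text{ for some } e\ge 1\}$. $\phi$ is Euler's totient function. For a prime $p$ and integer $\delta\ge 1$, $\alpha_{p,\delta}$ is defined by $q^{\alpha_{p,\delta}}\,\|\, p^{\delta\phi(q)}-1$ (i.e. $q^{\alpha_{p,\delta}}$ divides $p^{\delta\phi(q)}-1$ but $q^{\alpha_{p,\delta}+1}$ does not). For $p\in\widehat{\mathbb{P}_1}$, $\alpha_p=\min\{\alpha_{p,\delta} : \delta\ge 1,\ f(p^\delta)=1\}$. *)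

(* Defs.v *)
From mathcomp Require Import all_boot.
Set Implicit Arguments. Unset Strict Implicit. Unset Printing Implicit Defensive.

Definition zero_one (f : nat -> nat) : Prop := forall n, f n <= 1.

Definition multiplicative (f : nat -> nat) : Prop :=
  forall m n, 0 < m -> 0 < n -> coprime m n -> f (m * n) = f m * f n.

(* The q-kernel {(f(q^i n + r))_{n>=0} : i >= 1, 0 <= r <= q^i - 1} is finite:
   it is contained in a finite family F 0, ..., F (k-1) of sequences. *)
Definition q_automatic (q : nat) (f : nat -> nat) : Prop :=
  exists (k : nat) (F : nat -> nat -> nat),
    forall i r, 1 <= i -> r < q ^ i ->
      exists j, j < k /\ forall n, f (q ^ i * n + r) = F j n.

Definition P1hat (f : nat -> nat) (p : nat) : Prop :=
  prime p /\ exists e, 1 <= e /\ f (p ^ e) = 1.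

Definition infinite_set (P : nat -> Prop) : Prop :=
  forall N, exists p, N < p /\ P p.

Definition alpha_pd (q p delta : nat) : nat :=
  logn q (p ^ (delta * totient q) - 1).

Definition alpha_p_is (f : nat -> nat) (q p a : nat) : Prop :=
  (exists delta, 1 <= delta /\ f (p ^ delta) = 1 /\ alpha_pd q p delta = a) /\
  (forall delta, 1 <= delta -> f (p ^ delta) = 1 -> a <= alpha_pd q p delta).

(* Main.v *)
Require Import Defs.
From mathcomp Require Import all_boot.
From mathcomp Require Import zify ring.
From Stdlib Require Import Classical ClassicalEpsilon.

Lemma php n (g : nat -> nat) : (forall i, i <= n -> g i < n) ->
  exists i j, i < j <= n /\ g i = g j.
Proof.
move=> Hg; apply: NNPP => Hno.
pose h (i : 'I_n.+1) : 'I_n := Ordinal (Hg i (ltn_ord i)).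
have inj : injective h.
  move=> x y /(congr1 val) /= E; apply/val_inj => /=.
  case: (ltngtP x y) => // H; exfalso; apply: Hno.
    by exists x, y; split => //; rewrite H -ltnS ltn_ord.
  by exists y, x; split => //; rewrite H -ltnS ltn_ord.
by have := leq_card h inj; rewrite !card_ord ltnn.
Qed.

Lemma least (P : nat -> Prop) n : P n -> exists m, P m /\ forall k, P k -> m <= k.
Proof.
elim/ltn_ind: n => n IH Pn.
case: (classic (exists k, k < n /\ P k)) => [[k [lt Pk]]|H]; first exact: IH lt Pk.
exists n; split=> // k Pk; rewrite leqNgt; apply/negP => lt; apply: H; by exists k.
Qed.

Lemma choose_val K (R : nat -> nat -> Prop) :
  (forall N, exists p, N < p /\ exists a, a <= K /\ R p a) ->
  exists a, forall N, exists p, N < p /\ R p a.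
Proof.
elim: K => [|K IH] H.
  exists 0 => N; have [p [Np [a [a0 Rpa]]]] := H N.
  by exists p; split => //; move: a0; rewrite leqn0 => /eqP <-.
case: (classic (forall N, exists p, N < p /\ R p K.+1)) => [H1|H1]; first by exists K.+1.
have [N0 HN0] : exists N0, ~ exists p, N0 < p /\ R p K.+1.
  by apply: NNPP => C; apply: H1 => N; apply: NNPP => C2; apply: C; exists N.
apply: IH => N; have [p [Np [a [aK Rpa]]]] := H (maxn N N0).
exists p; split; first by apply: leq_ltn_trans Np; exact: leq_maxl.
exists a; split => //; rewrite leq_eqVlt in aK; case/orP: aK => [/eqP E|] //.
exfalso; apply: HN0; exists p; split; last by rewrite -E.
by apply: leq_ltn_trans Np; exact: leq_maxr.
Qed.

Lemma binom m y : (1 + y) ^ m = 1 + m * y %[mod y ^ 2].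
Proof.
elim: m => [|m IH]; first by rewrite expn0 mul0n addn0.
rewrite expnS -modnMmr IH modnMmr.
have -> : (1 + y) * (1 + m * y) = m * y ^ 2 + (1 + m.+1 * y) by ring.
by rewrite modnMDl.
Qed.

Lemma L2 (m s X : nat) : 0 < X ->
  (forall l, prime l -> l %| X -> l ^ (logn l X * s) = 1 %[mod m]) ->
  X ^ s = 1 %[mod m].
Proof.
elim/ltn_ind: X => X IH X0 H.
case: (ltngtP X 1) => [|X1|->]; last by rewrite exp1n.
  by rewrite ltnS leqn0 (gtn_eqF X0).
have lP := pdiv_prime X1; have ldX := pdiv_dvd X.
set l := pdiv X in lP ldX H *.
have [Y cY EY] := pfactor_coprime lP X0.
set e := logn l X in EY H *.
have e0 : 0 < e by rewrite /e -pfactor_dvdn // expn1.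
have Y0 : 0 < Y by move: X0; rewrite EY muln_gt0 => /andP [].
have YX : Y < X.
  rewrite [X in _ < X]EY -{1}(muln1 Y) ltn_pmul2l //.
  apply: (leq_trans (prime_gt1 lP)); rewrite -{1}(expn1 l) leq_pexp2l //.
  exact: prime_gt0.
have HY : Y ^ s = 1 %[mod m].
  apply: IH => // l' l'P l'Y.
  have l'X : l' %| X by rewrite EY dvdn_mulr.
  have ne : l' != l.
    apply/eqP => E; move: cY; rewrite prime_coprime // -E l'Y //.
  have -> : logn l' Y = logn l' X.
    have le0 : 0 < l ^ e by rewrite expn_gt0 prime_gt0.
    by rewrite EY (lognM _ Y0 le0) lognX (logn_prime _ lP) (negbTE ne) muln0 addn0.
  exact: H.
rewrite EY expnMn -expnM -modnMml HY modnMml mul1n H //.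
Qed.

Lemma L1 (f : nat -> nat) Y l : zero_one f -> multiplicative f -> 0 < Y -> f Y = 1 ->
  prime l -> f (l ^ logn l Y) = 1.
Proof.
move=> f01 fM Y0 fY lP.
have [Z cZ EZ] := pfactor_coprime lP Y0.
have Z0 : 0 < Z by move: Y0; rewrite EZ muln_gt0 => /andP [].
move: fY; rewrite {1}EZ fM // ?expn_gt0 ?prime_gt0 //; last first.
  by rewrite coprime_sym coprimeXl.
by move/eqP; rewrite muln_eq1 => /andP [_ /eqP].
Qed.
Lemma arith1 c I I' : I <= c -> I <= I' -> c + (I' - I) = I' + (c - I).
Proof. lia. Qed.
Lemma arith2 I I' r : I < I' -> r < I' - I -> I + r < I'.
Proof. lia. Qed.

Theorem proposition2 (q : nat) (f : nat -> nat) :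
  prime q -> zero_one f -> multiplicative f -> q_automatic q f ->
  infinite_set (P1hat f) ->
  exists alpha : nat, infinite_set (fun p => P1hat f p /\ alpha_p_is f q p alpha).
Proof.
move=> qP f01 fM [k [F Hk]] Hinf.
have q1 := prime_gt1 qP; have q0 := prime_gt0 qP.
have f1 : f 1 = 1.
  have [p [_ [pP [e [e1 fpe]]]]] := Hinf 0.
  have := fM (p ^ e) 1; rewrite muln1 fpe expn_gt0 prime_gt0 // coprimen1.
  by move=> /(_ isT isT isT) /esym /eqP; rewrite mul1n => /eqP.
have Hlev : forall t, exists j, j < k /\ forall n, f (q ^ t.+1 * n + 1) = F j n.
  move=> t; apply: Hk => //; rewrite expnS.
  by apply: (leq_trans q1); rewrite leq_pmulr // expn_gt0 q0.
pose G t := constructive_indefinite_description _ (Hlev t).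
have [t1 [t2 [/andP [lt12 le2] Eg]]] :=
  php k (fun t => sval (G t)) (fun t _ => proj1 (svalP (G t))).
set I := t1.+1; set I' := t2.+1.
have HI : forall n, f (q ^ I * n + 1) = f (q ^ I' * n + 1).
  move=> n; rewrite (proj2 (svalP (G t1)) n) (proj2 (svalP (G t2)) n).
  by rewrite /= in Eg; rewrite Eg.
have II : I < I' by [].
have I1 : 0 < I by [].
have I'k : I' <= k.+1 by [].
apply: (choose_val k) => N.
clear Eg G Hlev Hk.
pose Q := q ^ I' * N`!.
have Q0 : 0 < Q by rewrite muln_gt0 expn_gt0 q0 fact_gt0.
have Hn : forall b, exists pe : nat * nat,
    b < pe.1 /\ prime pe.1 /\ 0 < pe.2 /\ f (pe.1 ^ pe.2) = 1.
  by move=> b; have [p [bp [pP [e [e1 fpe]]]]] := Hinf b; exists (p, e).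
pose step (pe : nat * nat) : nat * nat := sval (constructive_indefinite_description _ (Hn pe.1)).
have Hstep : forall pe : nat * nat, pe.1 < (step pe).1 /\ prime (step pe).1 /\ 0 < (step pe).2 /\ f ((step pe).1 ^ (step pe).2) = 1 :=
  fun pe => svalP (constructive_indefinite_description _ (Hn pe.1)).
pose PE t := iter t.+1 step (Q, 0).
pose P t := (PE t).1; pose D t := (PE t).2.
have PS : forall t, P t < P t.+1 by move=> t; exact: (Hstep (PE t)).1.
have Hprop : forall t, prime (P t) /\ 0 < D t /\ f (P t ^ D t) = 1 :=
  fun t => (Hstep (iter t step (Q, 0))).2.
have QP : forall t, Q < P t.
  elim=> [|t IH]; first exact: (Hstep (Q, 0)).1.
  exact: ltn_trans IH (PS t).
have Pmono : forall t t', t < t' -> P t < P t'.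
  move=> t t' /subnKC <-; move: (t' - t.+1) => d.
  elim: d => [|d IH]; first by rewrite addn0 PS.
  by rewrite addnS; exact: ltn_trans IH (PS _).
have Ppos : forall t, 0 < P t ^ D t.
  by move=> t; rewrite expn_gt0 prime_gt0 // (Hprop t).1.
have cop : forall a b m, (forall t, a <= t < b -> coprime (P t ^ D t) m) ->
    coprime (\prod_(a <= t < b) P t ^ D t) m.
  move=> a b m H; rewrite big_seq_cond; apply: (big_ind (fun x => coprime x m)) => [|x y cx cy|i]; first exact: coprime1n.
    by rewrite coprimeMl cx cy.
  by rewrite andbT mem_index_iota => /H.
have cPQ : forall t, coprime (P t ^ D t) Q.
  move=> t; apply: coprimeXl; rewrite prime_coprime ?(Hprop t).1 //.
  by apply/negP => /(dvdn_leq Q0); rewrite leqNgt QP.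
pose pp j := \prod_(0 <= t < j) P t ^ D t.
have [j1 [j2 [/andP [lt12' le2'] Epp]]] :=
  php Q (fun j => pp j %% Q) (fun j _ => ltn_pmod _ Q0).
pose X := \prod_(j1 <= t < j2) P t ^ D t.
have EX : pp j2 = pp j1 * X by rewrite /pp /X -big_cat_nat // ltnW.
have fX : forall d, f (\prod_(j1 <= t < j1 + d) P t ^ D t) = 1.
  elim=> [|d IH]; first by rewrite addn0 big_geq.
  rewrite addnS big_nat_recr ?leq_addr //= fM ?IH ?(Hprop _).2.2 //.
    by rewrite prodn_gt0.
  apply: cop => t /andP [_ lt]; apply: coprimeXl; apply: coprimeXr.
  rewrite prime_coprime ?(Hprop t).1 // dvdn_prime2 ?(Hprop t).1 ?(Hprop _).1 //.
  by rewrite ltn_eqF // Pmono.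
have fX' : f X = 1 by rewrite /X -(subnKC (ltnW lt12')) fX.
have X1 : 1 < X.
  rewrite /X big_ltn //.
  apply: (@leq_trans (P j1 ^ D j1)); last by rewrite leq_pmulr // prodn_gt0.
  apply: (@leq_trans (P j1)); first by apply: prime_gt1; exact: (Hprop j1).1.
  by rewrite -{1}(expn1 (P j1)); exact: leq_pexp2l (prime_gt0 (Hprop j1).1) (Hprop j1).2.1.
have HQ : Q %| X - 1.
  have cQ : coprime Q (pp j1) by rewrite coprime_sym /pp cop.
  rewrite -(Gauss_dvdr _ cQ) mulnBr muln1 -EX -eqn_mod_dvd.
    by rewrite Epp.
  by rewrite EX leq_pmulr // ltnW.
have X1p : 0 < X - 1 by rewrite subn_gt0.
have HqI : q ^ I' %| X - 1 by apply: dvdn_trans HQ; apply: dvdn_mulr.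
have HN : N`! %| X - 1 by apply: dvdn_trans HQ; apply: dvdn_mull.
set a := logn q (X - 1).
have Ia : I' <= a by rewrite -pfactor_dvdn.
have [u cu Eu] := pfactor_coprime qP X1p.
rewrite -/a in Eu.
have u0 : 0 < u by move: X1p; rewrite Eu muln_gt0 => /andP [].
have Sh : forall t c, I <= c -> c + (I' - I) * t = a -> f (q ^ c * u + 1) = 1.
  elim=> [|t IH] c Ic Ec.
    rewrite muln0 addn0 in Ec; rewrite Ec mulnC -Eu subnK //; exact: ltnW.
  have H := IH (c + (I' - I)) (leq_trans Ic (leq_addr _ _)) ltac:(by rewrite mulnS addnA in Ec).
  have E1 : c + (I' - I) = I' + (c - I) by apply: arith1 => //; exact: ltnW.
  rewrite E1 in H.
  by rewrite -[in q ^ c](subnKC Ic) expnD -mulnA HI mulnA -expnD.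
set c0 := I + (a - I) %% (I' - I).
have dpos : 0 < I' - I by rewrite subn_gt0.
have fY : f (q ^ c0 * u + 1) = 1.
  apply: (Sh ((a - I) %/ (I' - I))); first exact: leq_addr.
  rewrite /c0 mulnC -addnA [_ %% _ + _]addnC -divn_eq subnKC //.
  exact: ltnW (leq_trans II Ia).
have c0lt : c0 < I' by apply: arith2 => //; exact: ltn_pmod.
have c01 : 0 < c0 by rewrite /c0 addn_gt0 I1.
set Y := q ^ c0 * u + 1.
have Y0 : 0 < Y by rewrite /Y addn1.
have Ybig : forall l, prime l -> l %| Y -> N < l.
  move=> l lP lY; rewrite ltnNge; apply/negP => lN.
  have lq : l %| q ^ c0 * u.
    case: (eqVneq l q) => [->|lq]; first by apply: dvdn_mulr; apply: dvdn_exp.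
    apply: dvdn_mull.
    have lX : l %| u * q ^ a.
      rewrite -Eu; apply: dvdn_trans HN; apply: dvdn_fact; by rewrite (prime_gt0 lP) lN.
    move: lX; rewrite Gauss_dvdl //; apply: coprimeXr.
    by rewrite prime_coprime // dvdn_prime2.
  have : l %| 1 by move: lY; rewrite /Y (dvdn_addr _ lq).
  by rewrite dvdn1 => /eqP l1; move: lP; rewrite l1.
have [l [lP [lY Hl]]] : exists l, prime l /\ l %| Y /\
    ~ (l ^ (logn l Y * totient q) = 1 %[mod q ^ c0.+1]).
  apply: NNPP => C.
  have : Y ^ totient q = 1 %[mod q ^ c0.+1].
    apply: L2 => // l lP lY; apply: NNPP => Hn'; apply: C; by exists l.
  rewrite /Y addnC; set y := q ^ c0 * u => E.
  have Hb := binom (totient q) y.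
  have dv : q ^ c0.+1 %| y ^ 2.
    rewrite /y expnMn -expnM; apply: dvdn_mulr; apply: dvdn_exp2l.
    by rewrite muln2 -addnn -addn1 leq_add2l.
  have E2 : 1 + totient q * y = 1 + 0 %[mod q ^ c0.+1].
    by rewrite addn0 -(modn_dvdm _ dv) -Hb (modn_dvdm _ dv) E.
  move/eqP: E2; rewrite eqn_modDl eqn_mod_dvd // subn0.
  rewrite /y mulnCA expnSr dvdn_pmul2l ?expn_gt0 ?q0 // Euclid_dvdM //.
  rewrite totient_prime //; case/orP => [H|H].
    have := dvdn_leq _ H; rewrite -subn1 subn_gt0 => /(_ q1).
    by rewrite leqNgt ltn_subrL q0.
  by move: cu; rewrite prime_coprime // H.
set e := logn l Y in Hl.
have fl : f (l ^ e) = 1 by apply: L1.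
have e1 : 0 < e by rewrite /e -pfactor_dvdn // expn1.
have Nl := Ybig l lP lY.
have Hal : alpha_pd q l e <= c0.
  rewrite /alpha_pd; set V := l ^ (e * totient q) - 1.
  rewrite leqNgt; apply/negP => Hc.
  have V0 : 0 < V by rewrite lt0n; apply/negP => /eqP V0; rewrite V0 logn0 in Hc.
  apply: Hl; apply/eqP; rewrite eqn_mod_dvd ?expn_gt0 ?prime_gt0 //.
  by rewrite pfactor_dvdn.
have [m [[d [d1 [fd Ed]]] Hm]] :=
  @least (fun a => exists d, 1 <= d /\ f (l ^ d) = 1 /\ alpha_pd q l d = a)
    (alpha_pd q l e) (ex_intro _ e (conj e1 (conj fl erefl))).
exists l; split => //; exists m; split.
  have := Hm _ (ex_intro _ e (conj e1 (conj fl erefl))).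
  move=> H1; rewrite -ltnS; apply: leq_trans I'k.
  by apply: leq_ltn_trans H1 _; apply: leq_ltn_trans Hal c0lt.
split; first by split => //; exists e.
split; first by exists d.
by move=> dd dd1 fdd; apply: Hm; exists dd.
Qed.
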